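(* Let $x,y>0$ and $r,s\in\mathbb{R}$, and let $F_{r,s;x,y}(w)=E(r+w,s+w;x,y)$ for $w\in\mathbb{R}$. If $s+r>0$, then the function $w\mapsto w\ln F_{r,s;x,y}(w)$ is convex on $\bigl(-\frac{s+r}{2},0\bigr)$. If $s+r<0$, then $w\mapsto w\ln F_{r,s;x,y}(w)$ is convex on $\bigl(0,-\frac{s+r}{2}\bigr)$.
   Context: For $x,y>0$ and $r,s\in\mathbb{R}$ the extended mean values are defined by $E(r,s;x,y)=\bigl(\frac{r}{s}\cdot\frac{y^s-x^s}{y^r-x^r}\bigr)^{1/(s-r)}$ if $rs(r-s)(x-y)\neq0$; $E(r,0;x,y)=E(0,r;x,y)=\bigl(\frac1r\cdot\frac{y^r-x^r}{\ln y-\ln x}\bigr)^{1/r}$ if $r(x-y)\neq0$; $E(r,r;x,y)=e^{-1/r}\bigl(\frac{x^{x^r}}{y^{y^r}}\bigr)^{1/(x^r-y^r)}$ if $r(x-y)\neq0$; $E(0,0;x,y)=\sqrt{xy}$ if $x\neq y$; $E(r,s;x,x)=x$. *)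

(* Defs.v *)
From Stdlib Require Import Reals Lra.
Open Scope R_scope.

Definition E (r s x y : R) : R :=
  if Req_EM_T x y then x
  else if Req_EM_T r 0 then
         (if Req_EM_T s 0 then sqrt (x * y)
          else Rpower ((1 / s) * (Rpower y s - Rpower x s) / (ln y - ln x)) (1 / s))
  else if Req_EM_T s 0 then
         Rpower ((1 / r) * (Rpower y r - Rpower x r) / (ln y - ln x)) (1 / r)
  else if Req_EM_T r s then
         exp (- (1 / r)) *
         Rpower (Rpower x (Rpower x r) / Rpower y (Rpower y r))
                (1 / (Rpower x r - Rpower y r))
  else Rpower ((r / s) * (Rpower y s - Rpower x s) / (Rpower y r - Rpower x r))
              (1 / (s - r)).

Definition F (r s x y w : R) : R := E (r + w) (s + w) x y.

Definition convex_on (f : R -> R) (a b : R) : Prop :=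
  forall u v t, a < u < b -> a < v < b -> 0 <= t <= 1 ->
    f (t * u + (1 - t) * v) <= t * f u + (1 - t) * f v.

(* Main.v *)
Require Import Defs.
From Stdlib Require Import Reals Lra Psatz.
Open Scope R_scope.

Lemma D_ext : forall f g x l l', (forall y, f y = g y) -> l = l' ->
  derivable_pt_lim f x l -> derivable_pt_lim g x l'.
Proof. intros f g x l l' H e D. subst. intros eps Heps. destruct (D eps Heps) as [d Hd].
  exists d. intros h Hh Hh'. rewrite <- !H. apply Hd; auto. Qed.

Lemma D_loc : forall f g x l, (exists d, 0 < d /\ forall y, Rabs (y - x) < d -> f y = g y) ->
  derivable_pt_lim f x l -> derivable_pt_lim g x l.
Proof. intros f g x l [d0 [Hd0 H]] D eps Heps. destruct (D eps Heps) as [d Hd].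
  assert (Hm : 0 < Rmin d d0) by (apply Rmin_pos; [apply cond_pos|auto]).
  exists (mkposreal _ Hm). intros h Hh Hh'. simpl in Hh'.
  assert (E1 : f (x+h) = g (x+h)). { apply H. replace (x+h-x) with h by ring.
    apply Rlt_le_trans with (1:=Hh'); apply Rmin_r. }
  assert (E2 : f x = g x). { apply H. replace (x-x) with 0 by ring. rewrite Rabs_R0; auto. }
  rewrite <- E1, <- E2. apply Hd; auto. apply Rlt_le_trans with (1:=Hh'); apply Rmin_l. Qed.

Lemma D_plus : forall f g x a b, derivable_pt_lim f x a -> derivable_pt_lim g x b ->
  derivable_pt_lim (fun y => f y + g y) x (a + b).
Proof. intros. exact (derivable_pt_lim_plus f g x a b H H0). Qed.
Lemma D_minus : forall f g x a b, derivable_pt_lim f x a -> derivable_pt_lim g x b ->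
  derivable_pt_lim (fun y => f y - g y) x (a - b).
Proof. intros. exact (derivable_pt_lim_minus f g x a b H H0). Qed.
Lemma D_mult : forall f g x a b, derivable_pt_lim f x a -> derivable_pt_lim g x b ->
  derivable_pt_lim (fun y => f y * g y) x (a * g x + f x * b).
Proof. intros. exact (derivable_pt_lim_mult f g x a b H H0). Qed.
Lemma D_div : forall f g x a b, derivable_pt_lim f x a -> derivable_pt_lim g x b -> g x <> 0 ->
  derivable_pt_lim (fun y => f y / g y) x ((a * g x - b * f x) / Rsqr (g x)).
Proof. intros. exact (derivable_pt_lim_div f g x a b H H0 H1). Qed.
Lemma D_comp : forall f g x a b, derivable_pt_lim f x a -> derivable_pt_lim g (f x) b ->
  derivable_pt_lim (fun y => g (f y)) x (b * a).
Proof. intros. exact (derivable_pt_lim_comp f g x a b H H0). Qed.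
Lemma D_id : forall x, derivable_pt_lim (fun y => y) x 1.
Proof. intros. exact (derivable_pt_lim_id x). Qed.
Lemma D_const : forall c x, derivable_pt_lim (fun _ => c) x 0.
Proof. intros. exact (derivable_pt_lim_const c x). Qed.
Lemma D_sinh : forall x, derivable_pt_lim sinh x (cosh x).
Proof. exact derivable_pt_lim_sinh. Qed.
Lemma D_cosh : forall x, derivable_pt_lim cosh x (sinh x).
Proof. exact derivable_pt_lim_cosh. Qed.

Lemma cosh_sinh2 : forall x, cosh x * cosh x - sinh x * sinh x = 1.
Proof. intros. unfold cosh, sinh.
  assert (exp x * exp (-x) = 1) by (rewrite <- exp_plus; replace (x + -x) with 0 by ring; apply exp_0).
  rewrite <- H. field. Qed.
Lemma cosh_pos : forall x, 1 <= cosh x.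
Proof. intros. unfold cosh.
  assert (exp x * exp (-x) = 1) by (rewrite <- exp_plus; replace (x + -x) with 0 by ring; apply exp_0).
  assert (0 < exp x) by apply exp_pos. assert (0 < exp (-x)) by apply exp_pos.
  pose proof (Rle_0_sqr (exp x - 1)). unfold Rsqr in *. nra. Qed.
Lemma sinh_odd : forall x, sinh (-x) = - sinh x.
Proof. intros. unfold sinh. rewrite Ropp_involutive. field. Qed.
Lemma cosh_even : forall x, cosh (-x) = cosh x.
Proof. intros. unfold cosh. rewrite Ropp_involutive. field. Qed.

Lemma nonneg_deriv : forall f f', f 0 = 0 ->
  (forall x, 0 <= x -> derivable_pt_lim f x (f' x)) ->
  (forall x, 0 <= x -> 0 <= f' x) -> forall u, 0 <= u -> 0 <= f u.
Proof. intros f f' H0 HD Hp u Hu. destruct (Req_dec u 0) as [->|Hn]. lra.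
  destruct (MVT_cor2 f f' 0 u) as [c [Hc1 Hc2]]. lra. intros; apply HD; lra.
  rewrite H0 in Hc1. assert (0 <= f' c) by (apply Hp; lra). nra. Qed.

Lemma incr_deriv : forall f f' a b, (forall x, a < x < b -> derivable_pt_lim f x (f' x)) ->
  (forall x, a < x < b -> 0 <= f' x) -> forall u v, a < u -> u <= v -> v < b -> f u <= f v.
Proof. intros f f' a b HD Hp u v H1 H2 H3. destruct (Req_dec u v) as [->|Hn]. lra.
  destruct (MVT_cor2 f f' u v) as [c [Hc1 Hc2]]. lra. intros; apply HD; lra.
  assert (0 <= f' c) by (apply Hp; lra). nra. Qed.

Lemma I1 : forall u, 0 <= u -> u <= sinh u.
Proof. intros u Hu. assert (0 <= (fun x => sinh x - x) u); [|simpl in *; lra].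
  apply (nonneg_deriv (fun x => sinh x - x) (fun x => cosh x - 1)). cbv beta; rewrite sinh_0; ring.
  intros. apply D_minus. apply D_sinh. apply D_id.
  intros. pose proof (cosh_pos x); lra. auto. Qed.

Lemma I2 : forall u, 0 <= u -> sinh u <= u * cosh u.
Proof. intros u Hu. assert (0 <= (fun x => x * cosh x - sinh x) u); [|simpl in *; lra].
  apply (nonneg_deriv (fun x => x * cosh x - sinh x) (fun x => x * sinh x)). cbv beta; rewrite sinh_0; ring.
  intros. eapply D_ext; [ | | apply D_minus; [apply D_mult; [apply D_id|apply D_cosh]|apply D_sinh]].
  intros; reflexivity. simpl. ring.
  intros. pose proof (I1 x H); nra. auto. Qed.

Lemma I3 : forall u, 0 <= u -> cosh u - 1 <= u * sinh u.
Proof. intros u Hu. assert (0 <= (fun x => x * sinh x - cosh x + 1) u); [|simpl in *; lra].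
  apply (nonneg_deriv (fun x => x * sinh x - cosh x + 1) (fun x => x * cosh x)). cbv beta; rewrite cosh_0; ring.
  intros. eapply D_ext; [ | | apply D_plus; [apply D_minus; [apply D_mult; [apply D_id|apply D_sinh]|apply D_cosh]|apply D_const]].
  intros; reflexivity. simpl. ring.
  intros. pose proof (cosh_pos x); nra. auto. Qed.

Definition Tc (x : R) := exp (ln (cosh x) * (1/3)).

Lemma Tc_pos : forall x, 0 < Tc x.
Proof. intros; apply exp_pos. Qed.
Lemma Tc_cube : forall x, Tc x * Tc x * Tc x = cosh x.
Proof. intros. unfold Tc. rewrite <- !exp_plus.
  replace (ln (cosh x) * (1 / 3) + ln (cosh x) * (1 / 3) + ln (cosh x) * (1 / 3)) with (ln (cosh x)) by field.
  apply exp_ln. pose proof (cosh_pos x); lra. Qed.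

Lemma D_Tc : forall x, derivable_pt_lim Tc x (Tc x * (/ cosh x * sinh x * (1/3))).
Proof. intros. unfold Tc.
  apply (D_comp (fun y => ln (cosh y) * (1/3)) exp x (/ cosh x * sinh x * (1/3))).
  eapply D_ext; [ | | apply D_mult; [ apply (D_comp cosh ln); [apply D_cosh | apply derivable_pt_lim_ln] | apply D_const]].
  intros; reflexivity. cbv beta; ring. pose proof (cosh_pos x); lra.
  apply derivable_pt_lim_exp. Qed.

Lemma I4 : forall u, 0 <= u -> u*u*u * cosh u <= sinh u * sinh u * sinh u.
Proof. intros u Hu.
  assert (H : 0 <= (fun x => sinh x / Tc x - x) u).
  { apply (nonneg_deriv (fun x => sinh x / Tc x - x)
      (fun x => (cosh x * Tc x - (Tc x * (/ cosh x * sinh x * (1/3))) * sinh x) / Rsqr (Tc x) - 1)).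
    - cbv beta. unfold Tc. rewrite cosh_0, ln_1, sinh_0. unfold Rdiv. ring.
    - intros. apply D_minus. apply D_div. apply D_sinh. apply D_Tc.
      pose proof (Tc_pos x); lra. apply D_id.
    - intros x _. pose proof (Tc_pos x) as Ht. pose proof (Tc_cube x) as Hc.
      pose proof (cosh_sinh2 x) as Hs. pose proof (cosh_pos x) as Hc1.
      set (t := Tc x) in *. set (c := cosh x) in *. set (s := sinh x) in *.
      unfold Rsqr.
      replace ((c * t - t * (/ c * s * (1 / 3)) * s) / (t * t) - 1) with
        ((2*c*c+1-3*c*t)/(3*c*t) + (c*c-1-s*s)/(3*c*t)) by (field; lra).
      replace (c*c-1-s*s) with 0 by lra. unfold Rdiv. rewrite Rmult_0_l, Rplus_0_r.
      apply Rmult_le_pos; [| left; apply Rinv_0_lt_compat; nra].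
      rewrite <- Hc. pose proof (Rle_0_sqr (t*t-1)). unfold Rsqr in *.
      assert (0 < 2*t*t+1) by nra. nra.
    - auto. }
  cbv beta in H. pose proof (Tc_pos u). pose proof (Tc_cube u).
  assert (u * Tc u <= sinh u).
  { apply Rmult_le_reg_r with (/ Tc u). apply Rinv_0_lt_compat; auto.
    rewrite Rmult_assoc, Rinv_r by lra. unfold Rdiv in H. lra. }
  rewrite <- H1. assert (0 <= u * Tc u) by nra.
  replace (u*u*u*(Tc u*Tc u*Tc u)) with ((u*Tc u)*(u*Tc u)*(u*Tc u)) by ring.
  apply Rmult_le_compat; try nra. Qed.

Lemma mvt_open : forall f f' u v, u < v ->
  (forall x, u <= x <= v -> continuity_pt f x) ->
  (forall x, u < x < v -> derivable_pt_lim f x (f' x)) ->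
  exists c, u < c < v /\ f v - f u = f' c * (v - u).
Proof. intros f f' u v Huv Hc Hd.
  pose (pr1 := fun c (P : u < c < v) => exist (fun l => derivable_pt_lim f c l) (f' c) (Hd c P)).
  pose (pr2 := fun c (P : u < c < v) => derivable_pt_id c).
  destruct (MVT f id u v pr1 pr2 Huv Hc (fun c _ => derivable_continuous_pt _ _ (derivable_pt_id c)))
    as [c [P HP]].
  exists c. split; auto. unfold pr1, pr2 in HP. rewrite derive_pt_id in HP. simpl in HP.
  unfold id in HP. lra. Qed.

Lemma decr_except : forall f f' a b e,
  (forall x, a < x < b -> continuity_pt f x) ->
  (forall x, a < x < b -> x <> e -> derivable_pt_lim f x (f' x)) ->
  (forall x, a < x < b -> x <> e -> f' x <= 0) ->
  forall u v, a < u -> u <= v -> v < b -> f v <= f u.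
Proof. intros f f' a b e Hc Hd Hn.
  assert (piece : forall u v, a < u -> u <= v -> v < b -> ~ (u < e < v) -> f v <= f u).
  { intros u v H1 H2 H3 H4. destruct (Req_dec u v) as [->|Hne]; [lra|].
    destruct (mvt_open f f' u v) as [c [Hc1 Hc2]]; [lra| intros; apply Hc; lra | |].
    intros; apply Hd; lra. assert (f' c <= 0) by (apply Hn; lra). nra. }
  intros u v H1 H2 H3. destruct (Rlt_dec u e) as [Hue|Hue]; [destruct (Rlt_dec e v) as [Hev|Hev]|].
  - apply Rle_trans with (f e). apply piece; lra. apply piece; lra.
  - apply piece; lra.
  - apply piece; lra. Qed.

Lemma convex_from_deriv : forall f f' a b,
  (forall x, a < x < b -> derivable_pt_lim f x (f' x)) ->
  (forall x y, a < x -> x <= y -> y < b -> f' x <= f' y) ->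
  convex_on f a b.
Proof.
  assert (main : forall f f' a b,
    (forall x, a < x < b -> derivable_pt_lim f x (f' x)) ->
    (forall x y, a < x -> x <= y -> y < b -> f' x <= f' y) ->
    forall u v t, a < u < b -> a < v < b -> 0 < t < 1 -> u < v ->
    f (t * u + (1 - t) * v) <= t * f u + (1 - t) * f v).
  { intros f f' a b Hd Hm u v t Hu Hv Ht Huv. set (z := t*u + (1-t)*v).
    assert (u < z < v) by (unfold z; nra).
    destruct (MVT_cor2 f f' u z) as [c1 [E1 C1]]. lra. intros; apply Hd; lra.
    destruct (MVT_cor2 f f' z v) as [c2 [E2 C2]]. lra. intros; apply Hd; lra.
    assert (f' c1 <= f' c2) by (apply Hm; lra).
    assert (z - u = (1-t)*(v-u)) by (unfold z; ring).
    assert (v - z = t*(v-u)) by (unfold z; ring).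
    assert (t * f u + (1 - t) * f v - f z = t*(1-t)*(v-u)*(f' c2 - f' c1)).
    { replace (t * f u + (1 - t) * f v - f z) with (-(t*(f z - f u)) + (1-t)*(f v - f z)) by ring.
      rewrite E1, E2. replace (z-u) with ((1-t)*(v-u)) by lra. replace (v-z) with (t*(v-u)) by lra. ring. }
    assert (0 <= t*(1-t)*(v-u)*(f' c2 - f' c1)).
    { apply Rmult_le_pos; [|lra]. apply Rmult_le_pos; [|lra]. nra. }
    lra. }
  intros f f' a b Hd Hm u v t Hu Hv Ht.
  destruct (Req_dec t 0) as [->|H0].
  { replace (0*u+(1-0)*v) with v by ring. lra. }
  destruct (Req_dec t 1) as [->|H1].
  { replace (1*u+(1-1)*v) with u by ring. lra. }
  destruct (Rtotal_order u v) as [Huv|[<-|Huv]].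
  - eapply main; eauto. lra.
  - replace (t*u+(1-t)*u) with u by ring. lra.
  - replace (t*u+(1-t)*v) with ((1-t)*v + (1-(1-t))*u) by ring.
    replace (t * f u + (1 - t) * f v) with ((1-t) * f v + (1 - (1-t)) * f u) by ring.
    eapply main; eauto. lra. Qed.

Definition Sh (u : R) := if Req_EM_T u 0 then 1 else sinh u / u.
Definition K (u : R) := ln (Sh u).
Definition K1 (u : R) := if Req_EM_T u 0 then 0 else cosh u / sinh u - 1 / u.
Definition K2 (u : R) := 1 / (u * u) - 1 / (sinh u * sinh u).
Definition K3 (u : R) := (0 * (u*u) - (1*u + u*1) * 1) / Rsqr (u*u)
   - (0 * (sinh u * sinh u) - (cosh u * sinh u + sinh u * cosh u) * 1) / Rsqr (sinh u * sinh u).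

Lemma sinh_pos : forall u, 0 < u -> 0 < sinh u.
Proof. intros. pose proof (I1 u). lra. Qed.
Lemma sinh_neq : forall u, u <> 0 -> sinh u <> 0.
Proof. intros u H. destruct (Rlt_dec 0 u). pose proof (sinh_pos u); lra.
  pose proof (sinh_pos (-u)). rewrite sinh_odd in H0. lra. Qed.
Lemma sinh_div_pos : forall u, u <> 0 -> 1 <= sinh u / u.
Proof. intros u H. destruct (Rlt_dec 0 u).
  - pose proof (I1 u). apply Rmult_le_reg_r with u; auto. unfold Rdiv. rewrite Rmult_assoc, Rinv_l; lra.
  - pose proof (I1 (-u)). rewrite sinh_odd in H0. replace (sinh u / u) with (- sinh u / - u) by (field; auto).
    apply Rmult_le_reg_r with (-u); [lra|]. unfold Rdiv. rewrite Rmult_assoc, Rinv_l; lra. Qed.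
Lemma Sh_ge1 : forall u, 1 <= Sh u.
Proof. intros. unfold Sh. destruct (Req_EM_T u 0). lra. apply sinh_div_pos; auto. Qed.
Lemma Sh_even : forall u, Sh (-u) = Sh u.
Proof. intros. unfold Sh. destruct (Req_EM_T (-u) 0), (Req_EM_T u 0); try lra.
  rewrite sinh_odd. field; auto. Qed.
Lemma K_even : forall u, K (-u) = K u.
Proof. intros; unfold K; rewrite Sh_even; auto. Qed.
Lemma K_0 : K 0 = 0.
Proof. unfold K, Sh. destruct (Req_EM_T 0 0); [apply ln_1|lra]. Qed.

Lemma Sh_le_cosh : forall u, 0 < u -> Sh u - 1 <= u * sinh u.
Proof. intros. unfold Sh. destruct (Req_EM_T u 0); [lra|].
  pose proof (I2 u). pose proof (I3 u). pose proof (I1 u).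
  assert (sinh u / u <= cosh u).
  { apply Rmult_le_reg_r with u; auto. unfold Rdiv. rewrite Rmult_assoc, Rinv_l; lra. }
  lra. Qed.

Lemma K_bound : forall u, 0 <= K u <= u * sinh u.
Proof.
  assert (pos : forall u, 0 < u -> 0 <= K u <= u * sinh u).
  { intros. unfold K. pose proof (Sh_ge1 u). split.
    rewrite <- ln_1. destruct (Req_dec (Sh u) 1) as [->|]; [lra|]. left; apply ln_increasing; lra.
    pose proof (exp_ineq1_le (ln (Sh u))). rewrite exp_ln in H1 by lra.
    pose proof (Sh_le_cosh u H). lra. }
  intros u. destruct (Rtotal_order u 0) as [H|[H|H]].
  - rewrite <- K_even. replace (u * sinh u) with (-u * sinh (-u)) by (rewrite sinh_odd; ring).
    apply pos; lra.
  - subst. rewrite K_0, sinh_0. lra.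
  - apply pos; auto. Qed.

Lemma sinh_small : forall eps, 0 < eps -> exists d, 0 < d /\ forall h, Rabs h < d -> Rabs (sinh h) < eps.
Proof. intros eps Heps.
  pose proof (derivable_continuous_pt sinh 0 (exist _ (cosh 0) (D_sinh 0))) as Hc.
  unfold continuity_pt, continue_in, limit1_in, limit_in in Hc. simpl in Hc.
  destruct (Hc eps Heps) as [d [Hd H]]. exists d. split; auto. intros h Hh.
  destruct (Req_dec h 0) as [->|Hn]. rewrite sinh_0, Rabs_R0; auto.
  specialize (H h). unfold R_dist in H. rewrite sinh_0, !Rminus_0_r in H. apply H.
  split; auto. unfold D_x, no_cond. split; auto. Qed.

Lemma DK0 : derivable_pt_lim K 0 0.
Proof. intros eps Heps. destruct (sinh_small eps Heps) as [d [Hd H]].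
  exists (mkposreal d Hd). intros h Hh Hhd. simpl in Hhd.
  rewrite Rplus_0_l, K_0, Rminus_0_r, Rminus_0_r.
  pose proof (K_bound h). specialize (H h Hhd).
  unfold Rdiv. rewrite Rabs_mult, Rabs_inv.
  assert (Ha : 0 < Rabs h) by (apply Rabs_pos_lt; auto).
  apply Rle_lt_trans with (Rabs (sinh h)); [|auto].
  apply Rmult_le_reg_r with (Rabs h); auto. rewrite Rmult_assoc, Rinv_l by lra.
  rewrite Rmult_1_r, Rabs_pos_eq by lra. rewrite <- Rabs_mult, Rmult_comm.
  apply Rle_trans with (1 := proj2 H0). apply Rle_abs. Qed.

Lemma near_nonzero : forall u, u <> 0 -> exists d, 0 < d /\ forall y, Rabs (y - u) < d -> y <> 0.
Proof. intros u H. exists (Rabs u). split. apply Rabs_pos_lt; auto.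
  intros y Hy Hy0. subst. rewrite Rminus_0_l, Rabs_Ropp in Hy. lra. Qed.

Lemma DK : forall u, derivable_pt_lim K u (K1 u).
Proof. intros u. destruct (Req_dec u 0) as [->|Hn].
  - unfold K1. destruct (Req_EM_T 0 0); [apply DK0|lra].
  - apply D_loc with (fun y => ln (sinh y / y)).
    + destruct (near_nonzero u Hn) as [d [Hd H]]. exists d; split; auto. intros y Hy.
      unfold K, Sh. destruct (Req_EM_T y 0); [exfalso; apply (H y); auto | auto].
    + unfold K1. destruct (Req_EM_T u 0); [lra|].
      eapply D_ext; [ | | apply (D_comp (fun y => sinh y / y) ln); [ apply D_div; [apply D_sinh | apply D_id | auto] | apply derivable_pt_lim_ln]].
      intros; reflexivity. pose proof (sinh_neq u Hn). unfold Rsqr. field. auto.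
      pose proof (sinh_div_pos u Hn). lra. Qed.

Lemma DK1 : forall u, u <> 0 -> derivable_pt_lim K1 u (K2 u).
Proof. intros u Hn.
  apply D_loc with (fun y => cosh y / sinh y - 1 / y).
  + destruct (near_nonzero u Hn) as [d [Hd H]]. exists d; split; auto. intros y Hy.
    unfold K1. destruct (Req_EM_T y 0); [exfalso; apply (H y); auto | auto].
  + pose proof (sinh_neq u Hn).
    eapply D_ext; [ | | apply D_minus; [apply D_div; [apply D_cosh|apply D_sinh|auto] | apply D_div; [apply D_const|apply D_id|auto]]].
    intros; reflexivity. unfold K2, Rsqr. pose proof (cosh_sinh2 u).
    replace (cosh u * cosh u) with (1 + sinh u * sinh u) by lra. field. split; auto. Qed.

Lemma DK2 : forall u, u <> 0 -> derivable_pt_lim K2 u (K3 u).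
Proof. intros u Hn. pose proof (sinh_neq u Hn). unfold K2, K3.
  apply (D_minus (fun y => 1 / (y*y)) (fun y => 1 / (sinh y * sinh y))).
  apply (D_div (fun _ => 1) (fun y => y * y)). apply D_const.
  apply (D_mult (fun y => y) (fun y => y)); apply D_id. apply Rmult_integral_contrapositive; auto.
  apply (D_div (fun _ => 1) (fun y => sinh y * sinh y)). apply D_const.
  apply (D_mult sinh sinh); apply D_sinh. apply Rmult_integral_contrapositive; auto. Qed.

Lemma K3_nonpos : forall u, 0 < u -> K3 u <= 0.
Proof. intros u Hu. pose proof (sinh_pos u Hu). pose proof (I4 u). unfold K3, Rsqr.
  set (s := sinh u) in *. set (c := cosh u) in *.
  replace ((0 * (u * u) - (1 * u + u * 1) * 1) / (u * u * (u * u)) -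
           (0 * (s * s) - (c * s + s * c) * 1) / (s * s * (s * s)))
    with (2 * (u*u*u*c - s*s*s) / (u*u*u*(s*s*s))) by (field; lra).
  specialize (H0 (Rlt_le _ _ Hu)).
  clearbody s c. assert (0 < u*u*u) by (apply Rmult_lt_0_compat; [apply Rmult_lt_0_compat|]; auto). assert (0 < s*s*s) by (apply Rmult_lt_0_compat; [apply Rmult_lt_0_compat|]; auto). assert (HP : 0 < u*u*u*(s*s*s)) by (apply Rmult_lt_0_compat; auto).
  assert (0 <= 2*(s*s*s-u*u*u*c) * / (u*u*u*(s*s*s))) by
    (apply Rmult_le_pos; [lra| left; apply Rinv_0_lt_compat; lra]).
  unfold Rdiv. replace (2 * (u * u * u * c - s * s * s) * / (u * u * u * (s * s * s))) with
    (- (2*(s*s*s-u*u*u*c) * / (u*u*u*(s*s*s)))) by ring. lra. Qed.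

Lemma K1_odd : forall u, K1 (-u) = - K1 u.
Proof. intros. unfold K1. destruct (Req_EM_T (-u) 0), (Req_EM_T u 0); try lra.
  rewrite sinh_odd, cosh_even. field. split; auto. apply sinh_neq; auto. Qed.

Lemma K1_bound_pos : forall u, 0 < u -> 0 <= K1 u <= u.
Proof. intros u Hu. unfold K1. destruct (Req_EM_T u 0); [lra|].
  pose proof (sinh_pos u Hu). pose proof (I1 u). pose proof (I2 u). pose proof (I3 u).
  replace (cosh u / sinh u - 1 / u) with ((u * cosh u - sinh u) / (u * sinh u)) by (field; lra).
  assert (0 < u * sinh u) by nra. split.
  - apply Rmult_le_pos; [lra| left; apply Rinv_0_lt_compat; auto].
  - apply Rmult_le_reg_r with (u * sinh u); auto. unfold Rdiv. rewrite Rmult_assoc, Rinv_l by lra.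
    nra. Qed.

Lemma K1_abs : forall u, Rabs (K1 u) <= Rabs u.
Proof. intros. destruct (Rtotal_order u 0) as [H|[H|H]].
  - replace u with (- - u) by ring. rewrite K1_odd, !Rabs_Ropp. pose proof (K1_bound_pos (-u)).
    assert (0 < - u) by lra. specialize (H0 H1).
    rewrite (Rabs_pos_eq (K1 (-u))) by lra. rewrite (Rabs_left u) by lra. lra.
  - subst. unfold K1. destruct (Req_EM_T 0 0); [|lra]. rewrite Rabs_R0; lra.
  - pose proof (K1_bound_pos u H). rewrite !Rabs_pos_eq; lra. Qed.

Lemma K1_cont : forall u, continuity_pt K1 u.
Proof. intros u. destruct (Req_dec u 0) as [->|Hn].
  - unfold continuity_pt, continue_in, limit1_in, limit_in. simpl. intros eps Heps.
    exists eps. split; auto. intros x [_ Hx]. unfold R_dist in *.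
    assert (K1 0 = 0) by (unfold K1; destruct (Req_EM_T 0 0); lra). rewrite H, Rminus_0_r.
    rewrite Rminus_0_r in Hx. pose proof (K1_abs x). lra.
  - apply derivable_continuous_pt. exists (K2 u). apply DK1; auto. Qed.

Lemma K2_nonneg : forall u, u <> 0 -> 0 <= K2 u.
Proof.
  assert (pos : forall u, 0 < u -> 0 <= K2 u).
  { intros u Hu. pose proof (I1 u). unfold K2.
    assert (1 / (sinh u * sinh u) <= 1 / (u*u)).
    { unfold Rdiv. rewrite !Rmult_1_l. apply Rinv_le_contravar. nra. nra. }
    lra. }
  intros u Hn. destruct (Rlt_dec 0 u). apply pos; auto.
  replace (K2 u) with (K2 (-u)) by (unfold K2; rewrite sinh_odd; field; split; auto; apply sinh_neq; auto).
  apply pos; lra. Qed.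

Lemma K1_mono_pos : forall u v, 0 < u -> u <= v -> K1 u <= K1 v.
Proof. intros u v Hu Huv. apply (incr_deriv K1 K2 0 (v+1)); try lra.
  intros; apply DK1; lra. intros; apply K2_nonneg; lra. Qed.

Lemma K1_mono : forall u v, u <= v -> K1 u <= K1 v.
Proof.
  assert (K0 : K1 0 = 0) by (unfold K1; destruct (Req_EM_T 0 0); lra).
  assert (nn : forall u, 0 <= u -> 0 <= K1 u).
  { intros u Hu. destruct (Req_dec u 0) as [->|]. lra. apply K1_bound_pos; lra. }
  intros u v Huv. destruct (Rlt_dec 0 u).
  - apply K1_mono_pos; auto.
  - destruct (Rle_dec 0 v).
    + assert (0 <= K1 (-u)) by (apply nn; lra). rewrite K1_odd in H. pose proof (nn v r). lra.
    + destruct (Req_dec u v) as [->|]. lra.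
      assert (K1 (-v) <= K1 (-u)). { apply K1_mono_pos; lra. }
      rewrite !K1_odd in H0. lra. Qed.

Lemma K2_mono_pos : forall u v, 0 < u -> u <= v -> K2 v <= K2 u.
Proof. intros u v Hu Huv.
  assert (- K2 u <= - K2 v); [|lra].
  apply (incr_deriv (fun x => - K2 x) (fun x => - K3 x) 0 (v+1)); try lra.
  intros. apply derivable_pt_lim_opp. apply DK2. lra.
  intros. pose proof (K3_nonpos x); lra. Qed.

Lemma K2_even : forall u, K2 (-u) = K2 u.
Proof. intros. unfold K2. rewrite sinh_odd. unfold Rdiv. f_equal; f_equal; f_equal; ring. Qed.

Lemma K2_cmp : forall p q, p <> 0 -> p * p <= q * q -> K2 q <= K2 p.
Proof. intros p q Hp Hpq.
  assert (forall u, K2 u = K2 (Rabs u)).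
  { intros. destruct (Rcase_abs u). rewrite Rabs_left by auto. rewrite K2_even; auto.
    rewrite Rabs_pos_eq; lra. }
  rewrite (H p), (H q). apply K2_mono_pos. apply Rabs_pos_lt; auto.
  rewrite <- (Rabs_pos_eq (Rabs q)) by apply Rabs_pos. apply Rsqr_le_abs_0.
  unfold Rsqr. rewrite <- !Rabs_mult. rewrite !Rabs_pos_eq by nra. auto. Qed.

Lemma C_minus : forall f g x, continuity_pt f x -> continuity_pt g x -> continuity_pt (fun y => f y - g y) x.
Proof. intros. exact (continuity_pt_minus f g x H H0). Qed.
Lemma C_mult : forall f g x, continuity_pt f x -> continuity_pt g x -> continuity_pt (fun y => f y * g y) x.
Proof. intros. exact (continuity_pt_mult f g x H H0). Qed.
Lemma C_comp : forall f g x, continuity_pt f x -> continuity_pt g (f x) -> continuity_pt (fun y => g (f y)) x.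
Proof. intros. exact (continuity_pt_comp f g x H H0). Qed.
Lemma C_D : forall f x l, derivable_pt_lim f x l -> continuity_pt f x.
Proof. intros. apply derivable_continuous_pt. exists l; auto. Qed.
Lemma D_shift : forall c x, derivable_pt_lim (fun y => c + y) x 1.
Proof. intros. eapply D_ext; [|  | apply D_plus; [apply D_const | apply D_id]]. intros; reflexivity. cbv beta; ring. Qed.

Definition Lf (k k1 : R -> R) r s w :=
  if Req_EM_T r s then w * k1 (r + w) else w * (k (s + w) - k (r + w)) / (s - r).

Section Core.
Variables k k1 k2 : R -> R.
Hypothesis Hk : forall u, derivable_pt_lim k u (k1 u).
Hypothesis Hk1 : forall u, u <> 0 -> derivable_pt_lim k1 u (k2 u).
Hypothesis Hc : forall u, continuity_pt k1 u.
Hypothesis Hm : forall u v, u <= v -> k1 u <= k1 v.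
Hypothesis Hcmp : forall p q, p <> 0 -> p * p <= q * q -> k2 q <= k2 p.
Hypothesis Hpos : forall u, u <> 0 -> 0 <= k2 u.

Lemma Dcomp_shift : forall f f' c x, derivable_pt_lim f (c + x) f' ->
  derivable_pt_lim (fun w => f (c + w)) x f'.
Proof. intros. eapply D_ext; [ | | apply (D_comp (fun w => c + w) f); [apply D_shift | apply H]].
  intros; reflexivity. cbv beta; ring. Qed.

Lemma core_eq : forall r, 0 < r -> convex_on (fun w => w * k1 (r + w)) (-r) 0.
Proof. intros r Hr.
  apply convex_from_deriv with (f' := fun w => k1 (r + w) + w * k2 (r + w)).
  - intros x Hx. eapply D_ext; [ | | apply D_mult; [apply D_id | apply (Dcomp_shift k1 _ r); apply Hk1; intro; lra]].
    intros; reflexivity. cbv beta; ring.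
  - intros x y H1 H2 H3. cbv beta.
    assert (k1 (r + x) <= k1 (r + y)) by (apply Hm; lra).
    assert (k2 (r + y) <= k2 (r + x)) by (apply Hcmp; [intro; lra | nra]).
    assert (0 <= k2 (r + y)) by (apply Hpos; intro; lra). nra. Qed.

Lemma core_lt : forall r s, r < s -> 0 < r + s ->
  convex_on (fun w => w * (k (s + w) - k (r + w)) / (s - r)) (-((s+r)/2)) 0.
Proof. intros r s Hrs Hp.
  set (a := -((s+r)/2)).
  set (A := fun w => (k (s + w) - k (r + w)) / (s - r)).
  set (D := fun w => (k1 (s + w) - k1 (r + w)) / (s - r)).
  assert (HA : forall x y, a < x -> x <= y -> y < 0 -> A x <= A y).
  { intros x y H1 H2 H3. apply (incr_deriv A D a 0); auto.
    - intros z Hz. unfold A, D. unfold Rdiv.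
      eapply D_ext; [ | | apply D_mult; [apply D_minus; [apply (Dcomp_shift k _ s); apply Hk | apply (Dcomp_shift k _ r); apply Hk] | apply D_const]].
      intros; reflexivity. cbv beta; ring.
    - intros z Hz. unfold D. apply Rmult_le_pos. assert (k1 (r+z) <= k1 (s+z)) by (apply Hm; lra). lra.
      left; apply Rinv_0_lt_compat; lra. }
  assert (HD : forall x y, a < x -> x <= y -> y < 0 -> D y <= D x).
  { intros x y H1 H2 H3.
    apply (decr_except D (fun w => (k2 (s + w) - k2 (r + w)) / (s - r)) a 0 (-r)); auto.
    - intros z Hz. unfold D, Rdiv. apply C_mult; [ | apply C_D with 0; apply D_const].
      apply C_minus; apply C_comp; try apply Hc; apply C_D with 1; apply D_shift.
    - intros z Hz Hne. unfold D, Rdiv.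
      eapply D_ext; [ | | apply D_mult; [apply D_minus; [apply (Dcomp_shift k1 _ s); apply Hk1 | apply (Dcomp_shift k1 _ r); apply Hk1] | apply D_const]].
      intros; reflexivity. cbv beta; ring. unfold a in Hz. intro; lra. intro; lra.
    - intros z Hz Hne. unfold a in Hz. unfold Rdiv. assert (k2 (s+z) <= k2 (r+z)) by (apply Hcmp; [intro; lra | nra]).
      assert (0 < / (s-r)) by (apply Rinv_0_lt_compat; lra). nra. }
  assert (HDp : forall x, a < x < 0 -> 0 <= D x).
  { intros z Hz. unfold D. apply Rmult_le_pos. assert (k1 (r+z) <= k1 (s+z)) by (apply Hm; lra). lra.
    left; apply Rinv_0_lt_compat; lra. }
  apply convex_from_deriv with (f' := fun w => A w + w * D w).
  - intros x Hx. unfold A, D, Rdiv.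
    eapply D_ext; [ | | apply D_mult; [apply D_mult; [apply D_id | apply D_minus; [apply (Dcomp_shift k _ s); apply Hk | apply (Dcomp_shift k _ r); apply Hk]] | apply D_const]].
    intros; reflexivity. cbv beta; ring.
  - intros x y H1 H2 H3. cbv beta. pose proof (HA x y H1 H2 H3). pose proof (HD x y H1 H2 H3).
    pose proof (HDp y). pose proof (HDp x). nra. Qed.

End Core.

Lemma conv_in : forall a b u v t, a < u < b -> a < v < b -> 0 <= t <= 1 -> a < t*u + (1-t)*v < b.
Proof. intros. destruct (Rle_dec u v).
  - assert (0 <= (1-t)*(v-u)) by (apply Rmult_le_pos; lra).
    assert (0 <= t*(v-u)) by (apply Rmult_le_pos; lra). split; nra.
  - assert (0 <= (1-t)*(u-v)) by (apply Rmult_le_pos; lra).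
    assert (0 <= t*(u-v)) by (apply Rmult_le_pos; lra). split; nra. Qed.

Lemma convex_ext : forall f g a b, (forall w, a < w < b -> f w = g w) -> convex_on f a b -> convex_on g a b.
Proof. intros f g a b He Hf u v t Hu Hv Ht.
  pose proof (conv_in a b u v t Hu Hv Ht).
  rewrite <- !He by auto. apply Hf; auto. Qed.

Lemma convex_lin : forall f a b c, convex_on f a b -> convex_on (fun w => c * w + f w) a b.
Proof. intros f a b c Hf u v t Hu Hv Ht. specialize (Hf u v t Hu Hv Ht). nra. Qed.

Lemma convex_refl : forall f a b, convex_on f a b -> convex_on (fun w => f (- w)) (- b) (- a).
Proof. intros f a b Hf u v t Hu Hv Ht.
  replace (- (t*u + (1-t)*v)) with (t*(-u) + (1-t)*(-v)) by ring. apply Hf; auto; lra. Qed.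

Section Core2.
Variables k k1 k2 : R -> R.
Hypothesis Hk : forall u, derivable_pt_lim k u (k1 u).
Hypothesis Hk1 : forall u, u <> 0 -> derivable_pt_lim k1 u (k2 u).
Hypothesis Hc : forall u, continuity_pt k1 u.
Hypothesis Hm : forall u v, u <= v -> k1 u <= k1 v.
Hypothesis Hcmp : forall p q, p <> 0 -> p * p <= q * q -> k2 q <= k2 p.
Hypothesis Hpos : forall u, u <> 0 -> 0 <= k2 u.

Lemma core1 : forall r s, 0 < s + r -> convex_on (Lf k k1 r s) (-((s+r)/2)) 0.
Proof. intros r s H. unfold Lf. destruct (Req_EM_T r s) as [<-|Hne].
  - replace (-((r+r)/2)) with (-r) by field. apply (core_eq k1 k2); auto. lra.
  - destruct (Rlt_dec r s).
    + apply (core_lt k k1 k2); auto; lra.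
    + apply convex_ext with (fun w => w * (k (r + w) - k (s + w)) / (r - s)).
      intros. field. lra.
      replace (s + r) with (r + s) by ring. apply (core_lt k k1 k2); auto; lra. Qed.
End Core2.

Lemma core2 : forall k k1 k2,
  (forall u, derivable_pt_lim k u (k1 u)) ->
  (forall u, u <> 0 -> derivable_pt_lim k1 u (k2 u)) ->
  (forall u, continuity_pt k1 u) ->
  (forall u v, u <= v -> k1 u <= k1 v) ->
  (forall p q, p <> 0 -> p * p <= q * q -> k2 q <= k2 p) ->
  (forall u, u <> 0 -> 0 <= k2 u) ->
  forall r s, s + r < 0 -> convex_on (Lf k k1 r s) 0 (-((s+r)/2)).
Proof. intros k k1 k2 Hk Hk1 Hc Hm Hcmp Hpos r s H.
  set (kh := fun u => k (- u)). set (kh1 := fun u => - k1 (- u)). set (kh2 := fun u => k2 (- u)).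
  assert (C : convex_on (Lf kh kh1 (-r) (-s)) (-((-s + -r)/2)) 0).
  { apply (core1 kh kh1 kh2).
    - intros u. unfold kh, kh1. eapply D_ext; [ | | apply (D_comp (fun y => - y) k); [apply derivable_pt_lim_opp; apply D_id | apply Hk]].
      intros; reflexivity. ring.
    - intros u Hu. unfold kh1, kh2. eapply D_ext; [ | | apply derivable_pt_lim_opp; apply (D_comp (fun y => - y) k1); [apply derivable_pt_lim_opp; apply D_id | apply Hk1]].
      intros; reflexivity. ring. intro; apply Hu; lra.
    - intros u. unfold kh1. apply continuity_pt_opp. apply (C_comp (fun y => - y) k1).
      apply C_D with (-1). apply derivable_pt_lim_opp; apply D_id. apply Hc.
    - intros u v Huv. unfold kh1. assert (k1 (-v) <= k1 (-u)) by (apply Hm; lra). lra.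
    - intros p q Hp Hpq. unfold kh2. apply Hcmp. intro; apply Hp; lra. nra.
    - intros u Hu. unfold kh2. apply Hpos. intro; apply Hu; lra.
    - lra. }
  apply convex_refl in C. replace (- 0) with 0 in C by ring.
  replace (- - ((- s + - r) / 2)) with (-((s+r)/2)) in C by field.
  apply convex_ext with (2 := C). intros w Hw. unfold Lf, kh, kh1.
  destruct (Req_EM_T (-r) (-s)), (Req_EM_T r s); try lra.
  - replace (- (- r + - w)) with (r + w) by ring. ring.
  - replace (- (- s + - w)) with (s + w) by ring. replace (- (- r + - w)) with (r + w) by ring.
    field. lra. Qed.

Section Scaled.
Variable c : R.
Hypothesis Hc : 0 < c.
Definition ks u := K (c * u).
Definition ks1 u := c * K1 (c * u).
Definition ks2 u := c * c * K2 (c * u).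

Lemma D_scal : forall x, derivable_pt_lim (fun y => c * y) x c.
Proof. intros. eapply D_ext; [ | | apply D_mult; [apply D_const | apply D_id]]. intros; reflexivity. cbv beta; ring. Qed.

Lemma ks_conv : forall r s, (0 < s + r -> convex_on (Lf ks ks1 r s) (-((s+r)/2)) 0) /\
                            (s + r < 0 -> convex_on (Lf ks ks1 r s) 0 (-((s+r)/2))).
Proof. intros r s.
  assert (H1 : forall u, derivable_pt_lim ks u (ks1 u)).
  { intros u. unfold ks, ks1. eapply D_ext; [ | | apply (D_comp (fun y => c * y) K); [apply D_scal | apply DK]].
    intros; reflexivity. ring. }
  assert (H2 : forall u, u <> 0 -> derivable_pt_lim ks1 u (ks2 u)).
  { intros u Hu. unfold ks1, ks2.
    eapply D_ext; [ | | apply D_mult; [apply D_const | apply (D_comp (fun y => c * y) K1); [apply D_scal | apply DK1]]].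
    intros; reflexivity. cbv beta; ring. apply Rmult_integral_contrapositive; split; lra. }
  assert (H3 : forall u, continuity_pt ks1 u).
  { intros u. unfold ks1. apply C_mult. apply C_D with 0; apply D_const.
    apply (C_comp (fun y => c * y) K1). apply C_D with c; apply D_scal. apply K1_cont. }
  assert (H4 : forall u v, u <= v -> ks1 u <= ks1 v).
  { intros u v Huv. unfold ks1. apply Rmult_le_compat_l. lra. apply K1_mono. nra. }
  assert (H5 : forall p q, p <> 0 -> p * p <= q * q -> ks2 q <= ks2 p).
  { intros p q Hp Hpq. unfold ks2. apply Rmult_le_compat_l. nra. apply K2_cmp.
    apply Rmult_integral_contrapositive; split; lra. nra. }
  assert (H6 : forall u, u <> 0 -> 0 <= ks2 u).
  { intros u Hu. unfold ks2. apply Rmult_le_pos. nra. apply K2_nonneg.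
    apply Rmult_integral_contrapositive; split; lra. }
  split. apply (core1 ks ks1 ks2); auto. apply (core2 ks ks1 ks2); auto. Qed.
End Scaled.

Section Link.
Variables x y : R.
Hypothesis hx : 0 < x.
Hypothesis hy : 0 < y.
Hypothesis hxy : x <> y.
Let a := ln x.
Let b := ln y.
Let al := (a + b) / 2.
Let c0 := (b - a) / 2.
Let c := Rabs c0.

Lemma ab_neq : a <> b.
Proof. intro H. apply hxy. unfold a, b in H. apply ln_inv; auto. Qed.
Lemma c_pos : 0 < c.
Proof. unfold c. apply Rabs_pos_lt. unfold c0. pose proof ab_neq. intro; apply H; lra. Qed.

Lemma Sh_c : forall t, Sh (c * t) = Sh (c0 * t).
Proof. intros. unfold c. destruct (Rcase_abs c0).
  rewrite Rabs_left by auto. replace (- c0 * t) with (- (c0 * t)) by ring. apply Sh_even.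
  rewrite Rabs_pos_eq by lra. auto. Qed.

Lemma P_id : forall t, t <> 0 -> (Rpower y t - Rpower x t) / t = exp (al * t) * (b - a) * Sh (c * t).
Proof. intros t Ht. rewrite Sh_c. pose proof ab_neq.
  assert (c0 * t <> 0). { apply Rmult_integral_contrapositive; split; auto. unfold c0; intro; apply H; lra. }
  unfold Sh. destruct (Req_EM_T (c0 * t) 0); [contradiction|].
  unfold Rpower, sinh. fold a b.
  replace (t * b) with (al * t + c0 * t) by (unfold al, c0; field).
  replace (t * a) with (al * t + - (c0 * t)) by (unfold al, c0; field).
  rewrite !exp_plus. unfold c0. field. split; auto. intro; apply H; lra. Qed.

Lemma Sh_pos : forall u, 0 < Sh u.
Proof. intros. pose proof (Sh_ge1 u). lra. Qed.

Lemma lnP : forall t, ln (exp (al * t) * Sh (c * t)) = al * t + K (c * t).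
Proof. intros. rewrite ln_mult by (apply exp_pos || apply Sh_pos). rewrite ln_exp. reflexivity. Qed.

Lemma Kc0 : K (c * 0) = 0.
Proof. rewrite Rmult_0_r. apply K_0. Qed.

Lemma lnE_neq : forall p q, p <> q ->
  ln (E p q x y) = (al * (q - p) + K (c * q) - K (c * p)) / (q - p).
Proof. intros p q Hpq. pose proof ab_neq as Hab.
  assert (Hba : b - a <> 0) by lra.
  unfold E. destruct (Req_EM_T x y) as [|_]; [contradiction|].
  destruct (Req_EM_T p 0) as [->|Hp].
  - destruct (Req_EM_T q 0) as [->|Hq]; [lra|].
    rewrite ln_Rpower. fold a b.
    replace (1 / q * (Rpower y q - Rpower x q) / (b - a)) with (exp (al * q) * Sh (c * q)).
    rewrite lnP, Kc0. field. auto.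
    replace (1 / q * (Rpower y q - Rpower x q)) with ((Rpower y q - Rpower x q) / q) by (field; auto).
    rewrite P_id by auto. field. auto.
  - destruct (Req_EM_T q 0) as [->|Hq].
    + rewrite ln_Rpower. fold a b.
      replace (1 / p * (Rpower y p - Rpower x p) / (b - a)) with (exp (al * p) * Sh (c * p)).
      rewrite lnP, Kc0. field. auto.
      replace (1 / p * (Rpower y p - Rpower x p)) with ((Rpower y p - Rpower x p) / p) by (field; auto).
      rewrite P_id by auto. field. auto.
    + destruct (Req_EM_T p q) as [|_]; [contradiction|].
      rewrite ln_Rpower.
      assert (Ep : Rpower y p - Rpower x p = p * (exp (al * p) * (b - a) * Sh (c * p))).
      { rewrite <- P_id by auto. field. auto. }
      assert (Eq : Rpower y q - Rpower x q = q * (exp (al * q) * (b - a) * Sh (c * q))).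
      { rewrite <- P_id by auto. field. auto. }
      pose proof (Sh_pos (c * p)). pose proof (exp_pos (al * p)).
      replace (p / q * (Rpower y q - Rpower x q) / (Rpower y p - Rpower x p)) with
        ((exp (al * q) * Sh (c * q)) / (exp (al * p) * Sh (c * p))).
      unfold Rdiv at 2. rewrite ln_mult, ln_Rinv. rewrite !lnP. field. lra.
      apply Rmult_lt_0_compat; [apply exp_pos | apply Sh_pos].
      apply Rmult_lt_0_compat; [apply exp_pos | apply Sh_pos].
      apply Rinv_0_lt_compat; apply Rmult_lt_0_compat; [apply exp_pos | apply Sh_pos].
      rewrite Ep, Eq. field. repeat split; auto; lra. Qed.

Lemma lnE_eq : forall p, p <> 0 -> ln (E p p x y) = al + c * K1 (c * p).
Proof. intros p Hp. pose proof ab_neq as Hab.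
  assert (Hc0 : c0 <> 0) by (unfold c0; intro; apply Hab; lra).
  assert (Hcp : c0 * p <> 0) by (apply Rmult_integral_contrapositive; split; auto).
  assert (K1c : c * K1 (c * p) = c0 * K1 (c0 * p)).
  { unfold c. destruct (Rcase_abs c0). rewrite Rabs_left by auto.
    replace (- c0 * p) with (- (c0 * p)) by ring. rewrite K1_odd. ring.
    rewrite Rabs_pos_eq by lra. auto. }
  rewrite K1c. unfold K1. destruct (Req_EM_T (c0 * p) 0); [contradiction|].
  unfold E. destruct (Req_EM_T x y) as [|_]; [contradiction|].
  destruct (Req_EM_T p 0); [contradiction|]. destruct (Req_EM_T p p) as [_|]; [|lra].
  assert (Hs : sinh (c0 * p) <> 0) by (apply sinh_neq; auto).
  rewrite ln_mult by (apply exp_pos || (unfold Rpower; apply exp_pos)).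
  rewrite ln_exp, ln_Rpower.
  replace (Rpower x (Rpower x p) / Rpower y (Rpower y p)) with (Rpower x (Rpower x p) * / Rpower y (Rpower y p)) by reflexivity.
  rewrite ln_mult, ln_Rinv by (unfold Rpower; try apply Rinv_0_lt_compat; apply exp_pos).
  rewrite !ln_Rpower. fold a b.
  unfold Rpower, cosh, sinh in *. fold a b.
  replace (p * a) with (al * p + - (c0 * p)) by (unfold al, c0; field).
  replace (p * b) with (al * p + c0 * p) by (unfold al, c0; field).
  replace a with (al - c0) by (unfold al, c0; field).
  replace b with (al + c0) by (unfold al, c0; field).
  rewrite !exp_plus.
  assert (exp (c0 * p) - exp (- (c0 * p)) <> 0) by (intro; apply Hs; lra).
  pose proof (exp_pos (al * p)).
  field. repeat split; auto; try lra.
  intro. apply H. apply Rmult_eq_reg_l with (exp (al * p)). lra. lra. Qed.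

End Link.

Lemma pointwise : forall x y r s w, 0 < x -> 0 < y -> x <> y -> (r = s -> r + w <> 0) ->
  (ln x + ln y) / 2 * w + Lf (ks (Rabs ((ln y - ln x) / 2))) (ks1 (Rabs ((ln y - ln x) / 2))) r s w
  = w * ln (F r s x y w).
Proof. intros x y r s w hx hy hxy Hw. unfold Lf, F.
  destruct (Req_EM_T r s) as [<-|Hne].
  - rewrite lnE_eq; auto. unfold ks1. ring.
  - rewrite lnE_neq; auto. unfold ks. replace (s + w - (r + w)) with (s - r) by ring. field. lra.
    intro; apply Hne; lra. Qed.

Theorem theorem5 (x y r s : R) (hx : 0 < x) (hy : 0 < y) :
  (s + r > 0 -> convex_on (fun w => w * ln (F r s x y w)) (- ((s + r) / 2)) 0) /\
  (s + r < 0 -> convex_on (fun w => w * ln (F r s x y w)) 0 (- ((s + r) / 2))).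
Proof.
  destruct (Req_dec x y) as [<-|hxy].
  { assert (L : forall a b, convex_on (fun w => w * ln (F r s x x w)) a b).
    { intros a b u v t _ _ _. unfold F, E. destruct (Req_EM_T x x); [|lra]. right; ring. }
    split; intros; apply L. }
  pose proof (c_pos x y hx hy hxy) as Hc.
  destruct (ks_conv _ Hc r s) as [C1 C2]. split; intros H.
  - apply convex_ext with (2 := convex_lin _ _ _ ((ln x + ln y) / 2) (C1 H)).
    intros w Hw. apply pointwise; auto. intros <-. lra.
  - apply convex_ext with (2 := convex_lin _ _ _ ((ln x + ln y) / 2) (C2 H)).
    intros w Hw. apply pointwise; auto. intros <-. lra.
Qed.
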